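(* Let $\mathcal{S}$ be finite, $\Pi$ irreducible stochastic on $\mathcal{S}$, $\kappa(x,y):=\pi_{xy}-\mathbf{1}_{x=y}$, $\mathcal{K}=\Pi-\mathrm{I}$, $Q=(q(y))$ the invariant distribution, and assume detailed balance $q(y)\kappa(y,z)=q(z)\kappa(z,y)$ for all $y,z$. Let $\Phi:(0,\infty)\to\mathbb{R}$ be convex, continuously differentiable with continuous strictly positive second derivative, $\Phi(1)=0$, $\varphi:=\Phi'$. Let $P\in\mathcal{M}$ with likelihood ratio vector $\boldsymbol{\ell}=P/Q$. Then along any smooth curve $(\widetilde P_t)_{0\le t<\infty}\subset\mathcal{M}$ with $\widetilde P_0=P$ and induced likelihood ratios $\widetilde\ell_t=\widetilde P_t/Q$, $$\Big(2\,\partial_tH^\Phi(\widetilde P_t\,|\,Q)+\big\|\partial_t\widetilde\ell_t\big\|^2_{\mathbb{H}^{-1}_\Theta(\mathcal{S},\boldsymbol{\ell}Q)}\Big)\Big|_{t=0}\ \ge\ -\big\|\varphi(\boldsymbol{\ell})\big\|^2_{\mathbb{H}^1_\Theta(\mathcal{S},\boldsymbol{\ell}Q)} .$$ Equality holds if and only if the curve satisfies the forward equation $\partial_t\widetilde P_t=\mathcal{K}'\widetilde P_t$ (equivalently, $\partial_t\widetilde\ell_t=\mathcal{K}\widetilde\ell_t$, with driver $f_t=-\varphi(\widetilde\ell_t)$ in the continuity equation $\partial_t\widetilde\ell_t+\nabla\cdot(\vartheta_{\widetilde\ell_t}\nabla f_t)=0$).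
   Context: $\mathcal{M}$: probability vectors on $\mathcal{S}$ with strictly positive entries; $\mathcal{K}'$ is the transpose of $\mathcal{K}$. $H^\Phi(P\,|\,Q):=\sum_yq(y)\Phi(p(y)/q(y))$. $\mathcal{Z}:=\{(x,y):\kappa(x,y)>0\}$, $c(x,y):=\frac12\kappa(x,y)q(x)$, $\nabla f(x,y):=f(y)-f(x)$, $(\nabla\cdot F)(x):=\frac12\sum_{y\ne x}\kappa(x,y)[F(x,y)-F(y,x)]$; $\Theta^\Phi(a,b):=\frac{a-b}{\varphi(a)-\varphi(b)}$ for $a\ne b$, $\Theta^\Phi(b,b):=1/\Phi''(b)$; $\vartheta_\ell(x,y):=\Theta^\Phi(\ell(x),\ell(y))$; $\|f\|^2_{\mathbb{H}^1_\Theta(\mathcal{S},\ell Q)}:=\sum_{(x,y)\in\mathcal{Z}}c(x,y)\vartheta_\ell(x,y)(\nabla f(x,y))^2$; $\|f\|_{\mathbb{H}^{-1}_\Theta(\mathcal{S},\ell Q)}:=\sup_{g}\frac{\sum_xq(x)f(x)g(x)}{\|g\|_{\mathbb{H}^1_\Theta(\mathcal{S},\ell Q)}}$. *)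

(* Defs.v *)
From HB Require Import structures.
From mathcomp Require Import all_boot all_order all_algebra.
From mathcomp Require Import all_classical all_reals all_analysis.
Set Implicit Arguments. Unset Strict Implicit. Unset Printing Implicit Defensive.
Import Order.TTheory GRing.Theory Num.Theory.
Import numFieldNormedType.Exports.
Local Open Scope classical_set_scope.
Local Open Scope ring_scope.

Section Defs.
Context {R : realType} {S : finType}.

Definition kappa (Pi : S -> S -> R) (x y : S) : R := Pi x y - (x == y)%:R.

Definition stochastic (Pi : S -> S -> R) : Prop :=
  (forall x y, 0 <= Pi x y) /\ (forall x, \sum_y Pi x y = 1).

Definition irreducible (Pi : S -> S -> R) : Prop :=
  forall x y, connect [rel a b | 0 < Pi a b] x y.

Definition invariant_distribution (Pi : S -> S -> R) (q : S -> R) : Prop :=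
  [/\ (forall x, 0 <= q x), \sum_x q x = 1 & (forall y, \sum_x q x * Pi x y = q y)].

Definition detailed_balance (Pi : S -> S -> R) (q : S -> R) : Prop :=
  forall y z, q y * kappa Pi y z = q z * kappa Pi z y.

Definition in_M (p : S -> R) : Prop := (forall x, 0 < p x) /\ \sum_x p x = 1.

Definition Hphi (Phi : R -> R) (q p : S -> R) : R := \sum_y q y * Phi (p y / q y).

Definition Theta (Phi : R -> R) (a b : R) : R :=
  if a != b then (a - b) / (derive1 Phi a - derive1 Phi b) else (derive1 (derive1 Phi) b)^-1.

Definition vartheta (Phi : R -> R) (l : S -> R) (x y : S) : R := Theta Phi (l x) (l y).

Definition cw (Pi : S -> S -> R) (q : S -> R) (x y : S) : R := 2^-1 * kappa Pi x y * q x.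

Definition grad (f : S -> R) (x y : S) : R := f y - f x.

Definition H1sq (Pi : S -> S -> R) (q : S -> R) (Phi : R -> R) (l f : S -> R) : R :=
  \sum_(xy : S * S | 0 < kappa Pi xy.1 xy.2)
     cw Pi q xy.1 xy.2 * vartheta Phi l xy.1 xy.2 * grad f xy.1 xy.2 ^+ 2.

Definition H1norm Pi q Phi (l f : S -> R) : R := Num.sqrt (H1sq Pi q Phi l f).

(* H^{-1}_Theta(S, l Q) norm: sup over g of <f,g>_q / ||g||_{H^1}
   (extended-real valued; MathComp convention x/0 = 0) *)
Definition Hm1norm Pi q Phi (l f : S -> R) : \bar R :=
  ereal_sup [set ((\sum_x q x * f x * g x) / H1norm Pi q Phi l g)%:E
            | g in [set: S -> R]].

Definition rderiv0 (f : R -> R) : R :=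
  lim ((fun h : R => h^-1 * (f h - f 0)) @ 0^'+).

(* c is C^infinity on [0, oo) (one-sided derivatives at 0) *)
Definition smooth_nonneg (c : R -> R) : Prop :=
  exists D : nat -> R -> R,
    (forall t, 0 <= t -> D 0%N t = c t) /\
    (forall n, ((fun h : R => h^-1 * (D n h - D n 0)) @ 0^'+ --> D n.+1 0) /\
               (forall t : R, 0 < t -> is_derive t (1 : R) (D n) (D n.+1 t))).

End Defs.

(* Main.v *)
Require Import Defs.
From HB Require Import structures.
From mathcomp Require Import all_boot all_order all_algebra.
From mathcomp Require Import all_classical all_reals all_analysis.
From mathcomp Require Import ring lra.
Import Order.TTheory GRing.Theory Num.Theory.
Import numFieldNormedType.Exports.
Local Open Scope classical_set_scope.
Local Open Scope ring_scope.
Section An.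
Context {R : realType}.

Definition RD (f : R -> R) (a : R) :=
  (fun h : R => h^-1 * (f h - f 0)) @ 0^'+ --> a.

Lemma RD_lim {f a} : RD f a -> rderiv0 f = a.
Proof. by move=> H; apply: cvg_lim. Qed.

Lemma RD_eq f g a : (forall t, 0 <= t -> f t = g t) -> RD g a -> RD f a.
Proof.
move=> e; rewrite /RD; apply: cvg_trans; apply: near_eq_cvg.
apply: filterS (nbhs_right_gt 0) => h /= h0.
by rewrite !e // ltW.
Qed.

Lemma RD_smooth c : smooth_nonneg c -> RD c (rderiv0 c).
Proof.
case=> D [D0 HD].
have H : RD c (D 1%N 0).
  apply: (@RD_eq _ (D 0%N)) => [t t0|]; first by rewrite D0.
  exact: (HD 0%N).1.
by rewrite (RD_lim H).
Qed.

Lemma RD_sum (I : Type) (r : seq I) (F : I -> R -> R) (a : I -> R) :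
  (forall i, RD (F i) (a i)) ->
  RD (fun t => \sum_(i <- r) F i t) (\sum_(i <- r) a i).
Proof.
move=> H; rewrite /RD.
under eq_cvg do rewrite -sumrB mulr_sumr.
apply: (@cvg_big _ _ +%R 0 xpredT add_continuous) => // i _; exact: H.
Qed.

Lemma RD_scale c f a : RD f a -> RD (fun t => c * f t) (c * a).
Proof.
move=> H; rewrite /RD.
under eq_cvg do rewrite -mulrBr mulrCA.
exact: cvgMl_tmp.
Qed.

Lemma RD_chain (Phi f : R -> R) a :
  derivable Phi (f 0) 1 -> RD f a ->
  RD (fun t => Phi (f t)) (derive1 Phi (f 0) * a).
Proof.
move=> dP H; set u0 := f 0; set p0 := derive1 Phi u0.
pose G k := if k == 0 then p0 else k^-1 * (Phi (k + u0) - Phi u0).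
pose d h := f h - u0.
have E : forall h, h^-1 * (Phi (f h) - Phi u0) = (h^-1 * (f h - u0)) * G (d h).
  move=> h; rewrite /G /d; case: eqP => [e|/eqP ne].
    have -> : f h = u0 by apply/eqP; rewrite -subr_eq0 e.
    by rewrite !subrr mulr0 mul0r.
  rewrite subrK mulrA -(mulrA _ _ (_^-1)) mulfV // mulr1 //.
rewrite /RD; under eq_cvg do rewrite E.
rewrite mulrC; apply: cvgM; first exact: H.
have Hd : d x @[x --> 0^'+] --> 0.
  have Hm : (fun h => h * (h^-1 * (f h - u0))) x @[x --> 0^'+] --> 0 * a.
    apply: cvgM; last exact: H.
    exact: cvg_within.
  rewrite mul0r in Hm; apply: cvg_trans Hm.
  apply: near_eq_cvg; apply: filterS (nbhs_right_gt 0) => h /= h0.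
  by rewrite /d mulrA mulfV ?mul1r // gt_eqF.
apply: (@cvg_comp _ _ _ d G _ (nbhs (0:R))); first exact: Hd.
have cG : {for 0, continuous G}.
  apply/continuous_withinNx.
  have -> : G 0 = p0 by rewrite /G eqxx.
  have : derivable Phi u0 1 := dP.
  have e : (fun h : R => h^-1 *: ((Phi \o shift u0) (h *: 1) - Phi u0)) =
           (fun h => h^-1 * (Phi (h + u0) - Phi u0)).
    by apply: funext => h /=; rewrite -[h%:A]/(h * 1) mulr1.
  rewrite /derivable e => dP'.
  have -> : p0 = lim ((fun h => h^-1 * (Phi (h + u0) - Phi u0)) @ 0^') by [].
  apply: cvg_trans dP'; apply: near_eq_cvg.
  near=> k. rewrite /G ifF //. apply/negbTE. near: k. exact: nbhs_dnbhs_neq.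
have G0 : G 0 = p0 by rewrite /G eqxx.
rewrite -G0; exact: cG.
Unshelve. all: by end_near.
Qed.
End An.
Section Alg.
Context {R : realType} {S : finType} (Pi : S -> S -> R) (q : S -> R)
  (Phi : R -> R) (l : S -> R).

Definition w x y := cw Pi q x y * vartheta Phi l x y.
Definition B (f g : S -> R) := \sum_(xy : S * S | 0 < kappa Pi xy.1 xy.2)
   w xy.1 xy.2 * (grad f xy.1 xy.2 * grad g xy.1 xy.2).
Definition ip (f g : S -> R) := \sum_x q x * f x * g x.

Lemma H1sqE f : H1sq Pi q Phi l f = B f f.
Proof. by apply: eq_bigr => xy _; rewrite /w expr2 mulrA. Qed.

Lemma B_sym f g : B f g = B g f.
Proof. by apply: eq_bigr => xy _; rewrite (mulrC (grad f _ _)). Qed.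

Lemma B_linl a b f g h :
  B (fun x => a * f x + b * g x) h = a * B f h + b * B g h.
Proof.
rewrite /B 2!mulr_sumr -big_split; apply: eq_bigr => xy _; rewrite /grad /=; ring.
Qed.

Lemma B_linr a b f g h :
  B h (fun x => a * f x + b * g x) = a * B h f + b * B h g.
Proof. by rewrite B_sym B_linl (B_sym f) (B_sym g). Qed.

Lemma ip_linr d a b f g :
  ip d (fun x => a * f x + b * g x) = a * ip d f + b * ip d g.
Proof. rewrite /ip 2!mulr_sumr -big_split; apply: eq_bigr => x _ /=; ring. Qed.

Lemma ip_ind d y : ip d (fun x => (x == y)%:R) = q y * d y.
Proof.
rewrite /ip (bigD1 y) //= eqxx mulr1 big1 ?addr0 // => x /negbTE ->.
by rewrite mulr0.
Qed.

Hypothesis qpos : forall x, 0 < q x.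
Hypothesis tpos : forall x y, 0 < kappa Pi x y -> 0 < vartheta Phi l x y.

Lemma w_gt0 x y : 0 < kappa Pi x y -> 0 < w x y.
Proof.
move=> k; rewrite /w /cw mulr_gt0 ?tpos // mulr_gt0 ?qpos // mulr_gt0 // invr_gt0.
Qed.

Lemma B_ge0 f : 0 <= B f f.
Proof.
apply: sumr_ge0 => xy k; apply: mulr_ge0; first exact: ltW (w_gt0 _ _ k).
by rewrite -expr2 sqr_ge0.
Qed.

Lemma path_const (e : rel S) (f : S -> R) :
  (forall a b, e a b -> f a = f b) ->
  forall p x, path e x p -> f x = f (last x p).
Proof.
move=> hf; elim=> [|z p IH] x //= /andP[exz pz].
by rewrite -IH // (hf _ _ exz).
Qed.

Lemma B_eq0 f : stochastic Pi -> irreducible Pi -> B f f = 0 -> forall x y, f x = f y.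
Proof.
move=> [Pge0 _] irr H0.
have nn : forall xy : S * S, 0 < kappa Pi xy.1 xy.2 ->
    0 <= w xy.1 xy.2 * (grad f xy.1 xy.2 * grad f xy.1 xy.2).
  move=> xy k; apply: mulr_ge0; first exact: ltW (w_gt0 _ _ k).
  by rewrite -expr2 sqr_ge0.
have E := psumr_eq0P nn H0.
have edge : forall a b, 0 < Pi a b -> f a = f b.
  move=> a b pab; have [->|ne] := eqVneq a b; first by [].
  have k : 0 < kappa Pi a b by rewrite /kappa (negbTE ne) subr0.
  have := E (a, b) k; rewrite /= => /eqP.
  rewrite mulf_eq0 (gt_eqF (w_gt0 _ _ k)) /= mulf_eq0 orbb /grad subr_eq0 => /eqP.
  by move=> ->.
move=> x y; have /connectP [p px ->] := irr x y.
apply: (@path_const [rel a b | 0 < Pi a b]) => // a b; exact: edge.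
Qed.

Lemma rowsum0 : stochastic Pi -> forall x, \sum_y kappa Pi x y = 0.
Proof.
move=> [_ s1] x; rewrite /kappa sumrB s1 (bigD1 x) //= eqxx big1 ?addr0 ?subrr //.
by move=> y; rewrite eq_sym => /negbTE ->.
Qed.

Lemma B_phi (phi : S -> R) g : stochastic Pi -> detailed_balance Pi q ->
  (forall x y, 0 < kappa Pi x y -> vartheta Phi l x y * grad phi x y = grad l x y) ->
  B phi g = - ip (fun x => \sum_y kappa Pi x y * l y) g.
Proof.
move=> st db key.
have [Pge0 _] := st.
have S1 : B phi g = \sum_x \sum_y cw Pi q x y * grad l x y * grad g x y.
  rewrite pair_big /= /B big_mkcond; apply: eq_bigr => -[x y] _ /=.
  case: ifP => hk.
    by rewrite /w -(key x y hk); ring.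
  have [exy|ne] := eqVneq x y.
    by rewrite exy /grad subrr mulr0 mul0r.
  have k0 : kappa Pi x y = 0.
    apply/eqP; rewrite eq_le leNgt hk /= /kappa (negbTE ne) subr0 Pge0 //.
  by rewrite /cw k0 mulr0 !mul0r.
pose T1 := \sum_x \sum_y q x * kappa Pi x y * (l y - l x) * g y.
pose T2 := \sum_x \sum_y q x * kappa Pi x y * (l y - l x) * g x.
have E1 : \sum_x \sum_y cw Pi q x y * grad l x y * grad g x y = 2^-1 * (T1 - T2).
  rewrite /T1 /T2 -sumrB mulr_sumr; apply: eq_bigr => x _.
  rewrite -sumrB mulr_sumr; apply: eq_bigr => y _; rewrite /cw /grad; ring.
have E2 : T1 = - T2.
  rewrite /T1 exchange_big /= /T2 -sumrN; apply: eq_bigr => y _.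
  rewrite -sumrN; apply: eq_bigr => x _.
  rewrite (db x y); ring.
have E3 : T2 = ip (fun x => \sum_y kappa Pi x y * l y) g.
  rewrite /T2 /ip; apply: eq_bigr => x _ /=.
  transitivity (q x * g x * (\sum_y kappa Pi x y * l y - l x * \sum_y kappa Pi x y)).
    rewrite [l x * _]mulr_sumr -sumrB mulr_sumr; apply: eq_bigr => y _; ring.
  rewrite rowsum0 // mulr0 subr0; ring.
by rewrite S1 E1 E2 E3; field.
Qed.

End Alg.

Lemma quad_cs {R : realType} (A C G : R) : 0 <= G ->
  (forall t, 0 <= A + 2 * t * C + t ^+ 2 * G) -> C ^+ 2 <= A * G.
Proof.
move=> G0 H.
have A0 : 0 <= A by have := H 0; rewrite !(mul0r, mulr0, expr0n, addr0).
have [Gp|Gz] := ltP 0 G.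
  have := H (- C / G); set t := - C / G => Ht.
  have tG : t * G = - C by rewrite /t mulrAC -mulrA mulfV ?mulr1 // gt_eqF.
  nra.
have G00 : G = 0 by apply/eqP; rewrite eq_le Gz G0.
rewrite G00 mulr0.
have [C0|Cn] := eqVneq C 0; first by rewrite C0 expr0n.
have := H (- (A + 1) / (2 * C)); set t := - (A + 1) / (2 * C) => Ht.
have tC : 2 * t * C = - (A + 1).
  by rewrite /t; field.
rewrite G00 mulr0 addr0 tC in Ht; lra.
Qed.

Section Main.
Context {R : realType} {S : finType} (Pi : S -> S -> R) (q : S -> R)
  (Phi : R -> R) (l d : S -> R).
Hypothesis qpos : forall x, 0 < q x.
Hypothesis tpos : forall x y, 0 < kappa Pi x y -> 0 < vartheta Phi l x y.
Hypothesis st : stochastic Pi.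
Hypothesis irr : irreducible Pi.
Hypothesis sd0 : \sum_x q x * d x = 0.

Let BB := B Pi q Phi l.
Let N := Hm1norm Pi q Phi l d.
Let Bge0 f : 0 <= BB f f := @B_ge0 R S Pi q Phi l qpos tpos f.

Lemma B_cs f g : (BB f g) ^+ 2 <= BB f f * BB g g.
Proof.
apply: quad_cs; first exact: Bge0.
move=> t; have := Bge0 (fun x => 1 * f x + t * g x); rewrite /BB.
rewrite B_linl !B_linr (B_sym Pi q Phi l g f) => h.
rewrite /BB; nra.
Qed.

Lemma B_cs' f g : - BB f g <= Num.sqrt (BB f f) * Num.sqrt (BB g g).
Proof.
rewrite -sqrtrM ?Bge0 //.
apply: le_trans (ler_norm _) _; rewrite normrN -sqrtr_sqr.
exact: ler_wsqrtr (B_cs f g).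
Qed.

Lemma elemE g : (\sum_x q x * d x * g x) / H1norm Pi q Phi l g =
  ip q d g / Num.sqrt (BB g g).
Proof. by rewrite /H1norm H1sqE. Qed.

Lemma N_ub g : ((ip q d g / Num.sqrt (BB g g))%:E <= N)%E.
Proof. apply: ereal_sup_ubound; exists g => //; exact: elemE. Qed.

Lemma N_ge0 : (0 <= N)%E.
Proof.
have := N_ub (fun _ => 0).
by rewrite /ip big1 ?mul0r // => x _; rewrite mulr0.
Qed.

Lemma N_le s : 0 <= s -> (forall g, ip q d g <= s * Num.sqrt (BB g g)) ->
  (N <= s%:E)%E.
Proof.
move=> s0 H; apply: ge_ereal_sup => _ [g _ <-]; rewrite elemE lee_fin.
have [z|nz] := eqVneq (Num.sqrt (BB g g)) 0.
  by rewrite z invr0 mulr0.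
rewrite ler_pdivrMr //; last by rewrite lt_neqAle eq_sym nz sqrtr_ge0.
Qed.

Lemma ip_const g : BB g g = 0 -> ip q d g = 0.
Proof.
move=> /(@B_eq0 R S Pi q Phi l qpos tpos g st irr) gc.
case: (pickP (@predT S)) => [x0 _|e].
  rewrite /ip (eq_bigr (fun x => q x * d x * g x0)) => [|x _]; last by rewrite (gc x x0).
  by rewrite -mulr_suml sd0 mul0r.
by rewrite /ip big1 // => x; have := e x.
Qed.

Lemma V n : N = n%:E -> forall g, 2 * ip q d g - BB g g <= n ^+ 2.
Proof.
move=> Nn g.
have n0 : 0 <= n by rewrite -lee_fin -Nn N_ge0.
have [Bz|Bp] := eqVneq (BB g g) 0.
  by rewrite Bz ip_const // mulr0 subr0 sqr_ge0.
have sp : 0 < Num.sqrt (BB g g).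
  by rewrite lt_neqAle eq_sym sqrtr_ge0 andbT sqrtr_eq0 -ltNge lt_neqAle eq_sym Bp Bge0.
have := N_ub g; rewrite Nn lee_fin ler_pdivrMr // => h.
have sq : Num.sqrt (BB g g) ^+ 2 = BB g g by rewrite sqr_sqrtr ?Bge0.
rewrite -sq; move: h; set s := Num.sqrt _; set i := ip q d g => h.
have : 0 <= (n - s) ^+ 2 by apply: sqr_ge0.
nra.
Qed.

End Main.

Lemma q_pos {R : realType} {S : finType} (Pi : S -> S -> R) (q : S -> R) :
  irreducible Pi -> stochastic Pi -> invariant_distribution Pi q ->
  forall x, 0 < q x.
Proof.
move=> irr [Pge0 _] [q0 qs qinv] y.
rewrite lt_neqAle q0 andbT eq_sym; apply/negP => /eqP qy0.
have back : forall a b, 0 < Pi a b -> q b = 0 -> q a = 0.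
  move=> a b pab qb; have := qinv b; rewrite qb => h.
  have nn : forall x, true -> 0 <= q x * Pi x b by move=> x _; rewrite mulr_ge0.
  have /eqP := psumr_eq0P nn h (i := a) isT.
  by rewrite mulf_eq0 (gt_eqF pab) orbF => /eqP.
have all0 : forall x, q x = 0.
  move=> x; have /connectP [p px ey] := irr x y.
  elim: p x px ey => [|z p IH] x /=; first by move=> _ <-.
  move=> /andP[xz pz] ey; apply: (back x z xz); exact: IH.
have : \sum_x q x = 0 by rewrite big1.
by rewrite qs => /eqP; rewrite oner_eq0.
Qed.

Lemma phi_incr {R : realType} (Phi : R -> R) :
  (forall x, 0 < x -> derivable (derive1 Phi) x 1) ->
  (forall x, 0 < x -> {for x, continuous (derive1 Phi)}) ->
  (forall x, 0 < x -> 0 < derive1 (derive1 Phi) x) ->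
  forall a b, 0 < a -> a < b -> derive1 Phi a < derive1 Phi b.
Proof.
move=> dv ct pos a b a0 ab.
apply: (@gtr0_derive1_incr _ _ a b) => //.
- move=> x; rewrite in_itv /= => /andP[ax _]; apply: dv; exact: lt_trans ax.
- move=> x; rewrite in_itv /= => /andP[ax _]; apply: pos; exact: lt_trans ax.
- apply: continuous_in_subspaceT => x; rewrite inE /= in_itv /= => /andP[ax _].
  apply: ct; exact: lt_le_trans ax.
Qed.

Lemma theta_key {R : realType} (Phi : R -> R) :
  (forall a b, 0 < a -> a < b -> derive1 Phi a < derive1 Phi b) ->
  forall a b, 0 < a -> 0 < b ->
  Theta Phi a b * (derive1 Phi b - derive1 Phi a) = b - a.
Proof.
move=> incr a b a0 b0; rewrite /Theta.
have [->|ne] := eqVneq a b; first by rewrite /= !subrr mulr0.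
rewrite /=.
have hne : derive1 Phi a - derive1 Phi b != 0.
  rewrite subr_eq0; have [ab|ab|ba] := ltgtP a b.
  - by rewrite lt_eqF // incr.
  - by rewrite gt_eqF // incr.
  - by rewrite ba eqxx in ne.
by field.
Qed.

Lemma theta_pos {R : realType} (Phi : R -> R) :
  (forall a b, 0 < a -> a < b -> derive1 Phi a < derive1 Phi b) ->
  (forall x, 0 < x -> 0 < derive1 (derive1 Phi) x) ->
  forall a b, 0 < a -> 0 < b -> 0 < Theta Phi a b.
Proof.
move=> incr pos a b a0 b0; rewrite /Theta.
have [->|ne] := eqVneq a b; first by rewrite /= invr_gt0 pos.
rewrite /=; have [ab|ab|ba] := ltgtP a b.
- rewrite -mulrNN -invrN !opprB divr_gt0 // subr_gt0 //.
  exact: incr.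
- by rewrite divr_gt0 // subr_gt0 // incr.
- by rewrite ba eqxx in ne.
Qed.

Theorem theorem9p2 (R : realType) (S : finType) (Pi : S -> S -> R) (q : S -> R)
    (Phi : R -> R) (P : S -> R) (Pt : R -> S -> R) :
  stochastic Pi -> irreducible Pi -> invariant_distribution Pi q ->
  detailed_balance Pi q ->
  (* Phi : (0,oo) -> R convex *)
  (forall x y t, 0 < x -> 0 < y -> 0 <= t <= 1 ->
     Phi (t * x + (1 - t) * y) <= t * Phi x + (1 - t) * Phi y) ->
  (* continuously differentiable, with continuous strictly positive Phi'' *)
  (forall x, 0 < x -> derivable Phi x 1) ->
  (forall x, 0 < x -> {for x, continuous (derive1 Phi)}) ->
  (forall x, 0 < x -> derivable (derive1 Phi) x 1) ->
  (forall x, 0 < x -> {for x, continuous (derive1 (derive1 Phi))}) ->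
  (forall x, 0 < x -> 0 < derive1 (derive1 Phi) x) ->
  Phi 1 = 0 ->
  in_M P ->
  (* smooth curve (Pt t)_{t >= 0} in M with Pt 0 = P *)
  (forall t, 0 <= t -> in_M (Pt t)) ->
  Pt 0 = P ->
  (forall x, smooth_nonneg (fun t => Pt t x)) ->
  let l := fun x => P x / q x in
  let dl := fun x => rderiv0 (fun t => Pt t x / q x) in
  let lhs := ((2 * rderiv0 (fun t => Hphi Phi q (Pt t)))%:E
              + Hm1norm Pi q Phi l dl * Hm1norm Pi q Phi l dl)%E in
  let rhs := (- (H1sq Pi q Phi l (fun x => derive1 Phi (l x)))%:E)%E in
  (rhs <= lhs)%E /\
  (lhs = rhs <->
   forall y, rderiv0 (fun t => Pt t y) = \sum_x kappa Pi x y * P x).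
Proof.
move=> st irr inv db _ dP cP ddP _ pos2 _ PM PtM Pt0 sm l dl lhs rhs.
have qp := q_pos Pi q irr st inv.
have incr := phi_incr Phi ddP cP pos2.
have lpos : forall x, 0 < l x by move=> x; rewrite divr_gt0 ?qp ?PM.1.
have tpos : forall x y, 0 < kappa Pi x y -> 0 < vartheta Phi l x y.
  by move=> x y _; rewrite /vartheta theta_pos.
pose phl := fun x => derive1 Phi (l x).
have key : forall x y, 0 < kappa Pi x y ->
    vartheta Phi l x y * grad phl x y = grad l x y.
  by move=> x y _; rewrite /vartheta /grad /phl theta_key.
pose p' := fun y => rderiv0 (fun t => Pt t y).
have RDp : forall y, RD (fun t => Pt t y) (p' y) by move=> y; exact: RD_smooth.
have RDl : forall y, RD (fun t => Pt t y / q y) (p' y / q y).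
  move=> y; apply: (@RD_eq R _ (fun t => (q y)^-1 * Pt t y)).
    by move=> t _; rewrite mulrC.
  rewrite [p' y / q y]mulrC; exact: RD_scale.
have dlE : forall y, dl y = p' y / q y by move=> y; exact: RD_lim.
have sumP : \sum_y p' y = 0.
  have h1 := RD_sum S (index_enum S) (fun y t => Pt t y) p' RDp.
  have h2 : RD (fun t => \sum_y Pt t y) 0.
    apply: (@RD_eq R _ (fun _ => 1)); first by move=> t t0; rewrite (PtM t t0).2.
    rewrite /RD; under eq_cvg do rewrite subrr mulr0; exact: cvg_cst.
  by rewrite -(RD_lim h1) (RD_lim h2).
have sd0 : \sum_x q x * dl x = 0.
  rewrite -[RHS]sumP; apply: eq_bigr => x _; rewrite dlE mulrCA divff ?mulr1 //.
  by rewrite gt_eqF.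
have mE : rderiv0 (fun t => Hphi Phi q (Pt t)) = ip q dl phl.
  apply: RD_lim; rewrite /Hphi /ip.
  have -> : \sum_x q x * dl x * phl x =
            \sum_y q y * (derive1 Phi (Pt 0 y / q y) * (p' y / q y)).
    by apply: eq_bigr => y _; rewrite dlE Pt0 /phl /l; ring.
  apply: (RD_sum S (index_enum S) (fun y t => q y * Phi (Pt t y / q y))) => y.
  apply: RD_scale; apply: (@RD_chain R Phi (fun t => Pt t y / q y)); last exact: RDl.
  by apply: dP; rewrite /= Pt0; exact: lpos.
pose r := fun x => \sum_y kappa Pi x y * l y.
have rr : forall y, \sum_x kappa Pi x y * P x = q y * r y.
  move=> y; rewrite /r mulr_sumr; apply: eq_bigr => x _.
  rewrite /l mulrA -db; field; by rewrite gt_eqF.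
have Bphi : forall g, B Pi q Phi l phl g = - ip q r g.
  by move=> g; apply: B_phi.
set BB := B Pi q Phi l.
have ipN : forall f g, ip q f (fun x => - g x) = - ip q f g.
  by move=> f g; rewrite /ip -sumrN; apply: eq_bigr => x _; ring.
have BN : forall f, BB (fun x => - f x) (fun x => - f x) = BB f f.
  by move=> f; rewrite /BB /B; apply: eq_bigr => xy _; rewrite /grad /=; ring.
have rhsE : rhs = (- BB phl phl)%:E by rewrite /rhs H1sqE.
have Nge0 := N_ge0 Pi q Phi l dl.
have VV := V Pi q Phi l dl qp tpos st irr sd0.
have lhsE : lhs = ((2 * ip q dl phl)%:E + Hm1norm Pi q Phi l dl * Hm1norm Pi q Phi l dl)%E.
  by rewrite /lhs mE.
rewrite rhsE lhsE; clear lhsE rhsE.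
case Nc : (Hm1norm Pi q Phi l dl) Nge0 VV => [n| |] Nge0 VV; last by [].
- have Vn := VV n erefl.
  split.
    rewrite -EFinM -EFinD lee_fin.
    have := Vn (fun x => - phl x); rewrite ipN -/BB BN; nra.
  split.
    move=> /eqP; rewrite -EFinM -EFinD eqe => /eqP E y.
    pose h := fun x : S => ((x == y)%:R : R).
    set c := ip q dl h + BB phl h.
    set b := BB h h.
    have b0 : 0 <= b by exact: (B_ge0 Pi q Phi l qp tpos).
    pose t := c / (b + 1).
    have tb : t * (b + 1) = c by rewrite /t divfK // gt_eqF // ltr_pwDr.
    have := Vn (fun x => -1 * phl x + t * h x).
    rewrite ip_linr /BB B_linl !B_linr (B_sym Pi q Phi l h phl) -/BB -/b => hv.
    have ht : t ^+ 2 <= 0.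
      have : 2 * t * c <= t ^+ 2 * b by rewrite /c; nra.
      rewrite -tb; nra.
    have t0 : t = 0.
      by apply/eqP; rewrite -sqrf_eq0 eq_le ht sqr_ge0.
    have c0 : c = 0 by rewrite -tb t0 mul0r.
    move: c0; rewrite /c /BB Bphi /h !ip_ind => /eqP.
    rewrite subr_eq0 => /eqP e.
    rewrite rr -e dlE /p' mulrCA divff ?mulr1 //; by rewrite gt_eqF.
  move=> H.
  have dr : forall y, dl y = r y.
    move=> y; rewrite dlE /p' H rr mulrC mulrA mulVf ?mul1r //; by rewrite gt_eqF.
  have ipd : forall g, ip q dl g = - BB phl g.
    by move=> g; rewrite /BB Bphi opprK /ip; apply: eq_bigr => x _; rewrite dr.
  have s0 : 0 <= BB phl phl by exact: (B_ge0 Pi q Phi l qp tpos).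
  have Nv : n = Num.sqrt (BB phl phl).
    apply/le_anti/andP; split.
      rewrite -lee_fin -Nc; apply: (N_le Pi q Phi l dl); first exact: sqrtr_ge0.
      by move=> g; rewrite ipd; exact: (B_cs' Pi q Phi l qp tpos).
    rewrite -lee_fin -Nc.
    apply: le_trans (N_ub Pi q Phi l dl (fun x => - phl x)).
    rewrite lee_fin ipN ipd opprK -/BB BN.
    have [z|nz] := eqVneq (Num.sqrt (BB phl phl)) 0.
      by rewrite z invr0 mulr0.
    rewrite ler_pdivlMr; last by rewrite lt_neqAle eq_sym nz sqrtr_ge0.
    by rewrite -expr2 sqr_sqrtr.
  have m2 : ip q dl phl = - BB phl phl by rewrite ipd.
  rewrite -EFinM -EFinD Nv m2 -expr2 sqr_sqrtr //.
  congr (_%:E); ring.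
- split; first by rewrite mulyy addey // leey.
  split; first by rewrite mulyy addey.
  move=> H; exfalso.
  have dr : forall y, dl y = r y.
    move=> y; rewrite dlE /p' H rr mulrC mulrA mulVf ?mul1r //; by rewrite gt_eqF.
  have ipd : forall g, ip q dl g = - BB phl g.
    by move=> g; rewrite /BB Bphi opprK /ip; apply: eq_bigr => x _; rewrite dr.
  have := N_le Pi q Phi l dl _ (sqrtr_ge0 (BB phl phl)).
  rewrite Nc => hh.
  have /hh : forall g, ip q dl g <= Num.sqrt (BB phl phl) * Num.sqrt (BB g g).
    by move=> g; rewrite ipd; exact: (B_cs' Pi q Phi l qp tpos).
  by rewrite leye_eq.
Qed.
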